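(* Let $\mathfrak{g}$ be a nice nilpotent Lie algebra of dimension $n$ with nice diagram $\Delta$, $m$ arrows, and structure constants $c\in\mathbb{R}^m$, let $\sigma$ be a diagram involution, and let $k\in\mathbb{R}$ and $\delta\in(\mathbb{Z}_2)^n$ be $\sigma$-invariant. Then $\mathfrak{g}$ has a $\sigma$-diagonal metric $g=\sum_i g_ie^i\otimes e^{\sigma_i}$ with $\operatorname{logsign} g=\delta$ and Ricci operator $\operatorname{Ric}=\frac12k\,\mathrm{id}$ if and only if there exists a $\sigma$-invariant $X\in\mathbb{R}^m$ such that: (K) $M_\Delta^{T}X=[k]$; (H) all entries of $X$ are nonzero; (L$_\sigma$) $\operatorname{logsign} X+\operatorname{logsign} c+\operatorname{logsign}\tilde c=M_{\Delta,2}\,\delta$; (P$_\sigma$) for a basis $\alpha_1,\dots,\alpha_r$ of the $\sigma$-invariant subspace $(\ker M_\Delta^T)^\sigma$, one has $\lvert X\rvert^{\alpha_i}=\lvert c\rvert^{2\alpha_i}$, $i=1,\dots,r$.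
   Context: A nice basis of a real Lie algebra is a basis $\{e_1,\dots,e_n\}$ with dual basis $\{e^i\}$ such that each $[e_i,e_j]$ is a multiple of some $e_h$ and each $e_i\lrcorner\,de^j$ is a multiple of some $e^h$ ($d$ the Chevalley–Eilenberg differential); a nice Lie algebra is a Lie algebra with a fixed nice basis. The nice diagram $\Delta$ has nodes $1,\dots,n$ and an arrow $i\xrightarrow{j}k$ whenever $e_k$ is a nonzero multiple of $[e_i,e_j]$; $\mathcal I_\Delta$ is the set of triples $\{\{i,j\},k\}$ with $i\xrightarrow{j}k$ an arrow, $m=\lvert\mathcal I_\Delta\rvert$. The structure constants $c\in\mathbb{R}^m$ are defined by $de^k=\sum c_{ijk}e^i\wedge e^j$ ($i<j$, over $\mathcal I_\Delta$). The root matrix $M_\Delta$ is the $m\times n$ matrix whose row indexed by $\{\{i,j\},k\}$ has $1$ in column $k$, $-1$ in columns $i,j$, $0$ elsewhere; $M_{\Delta,2}$ is its reduction mod $2$. A diagram involution is a permutation $\sigma$ of $\{1,\dots,n\}$ of order two which is an automorphism of $\Delta$, i.e. $i\xrightarrow{j}k$ is an arrow iff $\sigma_i\xrightarrow{\sigma_j}\sigma_k$ is. It acts on $\mathbb{R}^n$ by permuting coordinates and on $\mathbb{R}^m$ by permuting coordinates via $\{\{i,j\},k\}\mapsto\{\{\sigma_i,\sigma_j\},\sigma_k\}$. The vector $\tilde c\in\mathbb{R}^m$ is the coordinate vector, in the basis $e^l\wedge e^h\otimes e_p$ ($l<h$), of $\sum c_{ijk}\,e^{\sigma_i}\wedge e^{\sigma_j}\otimes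 e_{\sigma_k}$. A $\sigma$-diagonal metric is a nondegenerate scalar product $\sum_i g_ie^i\otimes e^{\sigma_i}$ with $g=(g_1,\dots,g_n)\in(\mathbb{R}\setminus\{0\})^n$ $\sigma$-invariant. $\operatorname{logsign}x=0$ for $x>0$ and $1$ for $x<0$, applied componentwise; $[k]\in\mathbb{R}^n$ has all entries $k$; $\lvert X\rvert^\alpha=\prod_j\lvert x_j\rvert^{\alpha_j}$; $\operatorname{Ric}$ is the Ricci operator of the left-invariant pseudoriemannian metric. *)

(* Defs.v *)
From HB Require Import structures.
From mathcomp Require Import all_boot all_order all_algebra all_fingroup.
From mathcomp Require Import all_classical all_reals all_analysis.
Set Implicit Arguments. Unset Strict Implicit. Unset Printing Implicit Defensive.
Import Order.TTheory GRing.Theory Num.Theory.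
Local Open Scope ring_scope.

(* A real Lie algebra of dimension n with fixed basis e_1..e_n is encoded by
   its bracket constants: [e_i, e_j] = \sum_k C i j k e_k. *)

Definition lie_algebra (R : realType) n (C : 'I_n -> 'I_n -> 'I_n -> R) : Prop :=
  (forall i j k, C i j k = - C j i k) /\
  (forall i j h k, \sum_(l < n) (C i j l * C l h k + C j h l * C l i k
                                  + C h i l * C l j k) = 0).

(* ad_{e_i} in row-vector convention: y ↦ [e_i, y] is  y *m ad C i. *)
Definition ad (R : realType) n (C : 'I_n -> 'I_n -> 'I_n -> R) (i : 'I_n) : 'M[R]_n :=
  \matrix_(j, k) C i j k.

(* nilpotent: the lower central series vanishes, i.e. all iterated brackets
   [x_1,[x_2,...,[x_N,y]]] vanish (multilinearity: enough on basis vectors). *)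
Definition nilpotent_lie (R : realType) n (C : 'I_n -> 'I_n -> 'I_n -> R) : Prop :=
  exists N : nat, forall s : N.-tuple 'I_n,
    foldr (fun i A => ad C i *m A) (1%:M : 'M[R]_n) s = 0.

(* nice basis: each [e_i,e_j] is a multiple of some e_h, and each
   e_i -| de^j (whose e^h-coefficient is de^j(e_i,e_h) = - C i h j)
   is a multiple of some e^h. *)
Definition nice_basis (R : realType) n (C : 'I_n -> 'I_n -> 'I_n -> R) : Prop :=
  (forall i j k k', C i j k != 0 -> C i j k' != 0 -> k = k') /\
  (forall i j h h', C i h j != 0 -> C i h' j != 0 -> h = h').

Definition triple n := ('I_n * 'I_n * 'I_n)%type.

(* {{i,j},k} in I_Delta, represented as (i,j,k) with i < j *)
Definition is_arrow (R : realType) n (C : 'I_n -> 'I_n -> 'I_n -> R) (t : triple n) : bool :=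
  ((t.1.1 : nat) < t.1.2)%N && (C t.1.1 t.1.2 t.2 != 0).

Definition arrows (R : realType) n (C : 'I_n -> 'I_n -> 'I_n -> R) :=
  {t : triple n | is_arrow C t}.

(* coefficient of e^i /\ e^j (i<j) in de^k, with de^k(x,y) = - e^k([x,y]) *)
Definition sc (R : realType) n (C : 'I_n -> 'I_n -> 'I_n -> R) (i j k : 'I_n) : R :=
  - C i j k.

Definition cvec (R : realType) n (C : 'I_n -> 'I_n -> 'I_n -> R) (a : arrows C) : R :=
  sc C (val a).1.1 (val a).1.2 (val a).2.

(* c~ : coordinates of \sum c_ijk e^{s i} /\ e^{s j} (x) e_{s k} *)
Definition ctilde (R : realType) n (C : 'I_n -> 'I_n -> 'I_n -> R)
    (s : {perm 'I_n}) (a : arrows C) : R :=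
  let: (l, h, p) := val a in
  if ((s l : nat) < s h)%N then sc C (s l) (s h) (s p)
  else - sc C (s h) (s l) (s p).

Definition Mroot (R : realType) n (C : 'I_n -> 'I_n -> 'I_n -> R)
    (a : arrows C) (l : 'I_n) : int :=
  let: (i, j, k) := val a in
  (l == k)%:Z - (l == i)%:Z - (l == j)%:Z.

(* M_{Delta,2} delta, computed in Z_2 = (bool, xor, and) *)
Definition M2_mul (R : realType) n (C : 'I_n -> 'I_n -> 'I_n -> R)
    (delta : 'I_n -> bool) (a : arrows C) : bool :=
  \big[addb/false]_(l < n) (odd (absz (Mroot a l)) && delta l).

Definition logsign (R : realType) (x : R) : bool := x < 0.

Definition diagram_involution (R : realType) n (C : 'I_n -> 'I_n -> 'I_n -> R)
    (s : {perm 'I_n}) : Prop :=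
  #[s]%g = 2%N /\
  (forall i j k, (C i j k != 0) = (C (s i) (s j) (s k) != 0)).

Definition tri_img n (s : {perm 'I_n}) (t : triple n) : triple n :=
  let: (i, j, k) := t in
  if ((s i : nat) < s j)%N then (s i, s j, s k) else (s j, s i, s k).

Definition inv_arr (R : realType) n (C : 'I_n -> 'I_n -> 'I_n -> R)
    (s : {perm 'I_n}) (X : arrows C -> R) : Prop :=
  forall a b : arrows C, val b = tri_img s (val a) -> X b = X a.

Definition kerMT_inv (R : realType) n (C : 'I_n -> 'I_n -> 'I_n -> R)
    (s : {perm 'I_n}) (al : arrows C -> R) : Prop :=
  (forall l : 'I_n, \sum_(a : arrows C) (Mroot a l)%:~R * al a = 0) /\ inv_arr s al.

Definition is_basis (R : realType) (A : finType) (P : (A -> R) -> Prop) r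
    (alpha : 'I_r -> A -> R) : Prop :=
  (forall i, P (alpha i)) /\
  (forall lam : 'I_r -> R, (forall a, \sum_(i < r) lam i * alpha i a = 0) ->
      forall i, lam i = 0) /\
  (forall v, P v -> exists lam : 'I_r -> R,
      forall a, v a = \sum_(i < r) lam i * alpha i a).

Definition monopow (R : realType) (A : finType) (X al : A -> R) : R :=
  \prod_(a : A) powR `|X a| (al a).

Definition metric_mx (R : realType) n (s : {perm 'I_n}) (g : 'I_n -> R) : 'M[R]_n :=
  \matrix_(i, j) (if j == s i then g i else 0).

Definition sigma_diag_metric (R : realType) n (s : {perm 'I_n}) (g : 'I_n -> R) : Prop :=
  (forall i, g i != 0) /\ (forall i, g (s i) = g i).

Definition ebas (R : realType) n (h : 'I_n) : 'rV[R]_n := delta_mx 0 h.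

Definition gf (R : realType) n (G : 'M[R]_n) (u v : 'rV[R]_n) : R :=
  (u *m G *m v^T) 0 0.

Definition br (R : realType) n (C : 'I_n -> 'I_n -> 'I_n -> R) (i j : 'I_n) : 'rV[R]_n :=
  \row_k C i j k.

Definition brv (R : realType) n (C : 'I_n -> 'I_n -> 'I_n -> R) (u v : 'rV[R]_n) : 'rV[R]_n :=
  \sum_(i < n) \sum_(j < n) (u 0 i * v 0 j) *: br C i j.

(* Levi-Civita connection on basis vectors via the Koszul formula
   2 g(nabla_X Y, Z) = g([X,Y],Z) - g([Y,Z],X) + g([Z,X],Y). *)
Definition LC (R : realType) n (C : 'I_n -> 'I_n -> 'I_n -> R) (G : 'M[R]_n)
    (i j : 'I_n) : 'rV[R]_n :=
  (2^-1 *: \row_h (gf G (br C i j) (ebas R h) - gf G (br C j h) (ebas R i)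
                   + gf G (br C h i) (ebas R j))) *m invmx G.

Definition nabla (R : realType) n (C : 'I_n -> 'I_n -> 'I_n -> R) (G : 'M[R]_n)
    (u v : 'rV[R]_n) : 'rV[R]_n :=
  \sum_(i < n) \sum_(j < n) (u 0 i * v 0 j) *: LC C G i j.

Definition curv (R : realType) n (C : 'I_n -> 'I_n -> 'I_n -> R) (G : 'M[R]_n)
    (u v w : 'rV[R]_n) : 'rV[R]_n :=
  nabla C G u (nabla C G v w) - nabla C G v (nabla C G u w) - nabla C G (brv C u v) w.

Definition ricci_form (R : realType) n (C : 'I_n -> 'I_n -> 'I_n -> R) (G : 'M[R]_n)
    (j l : 'I_n) : R :=
  \sum_(i < n) (curv C G (ebas R i) (ebas R j) (ebas R l)) 0 i.

(* Ricci operator: g(Ric Y, Z) = ric(Y, Z); row-vector convention Y |-> Y *m Ric *)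
Definition Ric_op (R : realType) n (C : 'I_n -> 'I_n -> 'I_n -> R) (G : 'M[R]_n) : 'M[R]_n :=
  (\matrix_(j, l) ricci_form C G j l) *m invmx G.

Arguments inv_arr {R n} C s X.
Arguments kerMT_inv {R n} C s al.
Arguments ctilde {R n} C s a.
Arguments M2_mul {R n} C delta a.
Arguments cvec {R n} C a.

(* Main.v *)
Require Import Defs.
From HB Require Import structures.
From mathcomp Require Import all_boot all_order all_algebra all_fingroup.
From mathcomp Require Import all_classical all_reals all_analysis.
From mathcomp Require Import ring lra zify.
Import Order.TTheory GRing.Theory Num.Theory.
Local Open Scope ring_scope.

Module Aux.
Set Implicit Arguments. Unset Strict Implicit. Unset Printing Implicit Defensive.

Section Ricci.
Variables (R : realType) (n : nat) (C : 'I_n -> 'I_n -> 'I_n -> R) (s : {perm 'I_n}) (g : 'I_n -> R).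
Hypothesis antisym : forall i j k, C i j k = - C j i k.
Hypothesis jacobi : forall i j h k, \sum_(l < n) (C i j l * C l h k + C j h l * C l i k
                                  + C h i l * C l j k) = 0.
Hypothesis kill : forall l j i b, C l i b * C j b i = 0.
Hypothesis ss : forall i, s (s i) = i.
Hypothesis gnz : forall i, g i != 0.
Hypothesis gs : forall i, g (s i) = g i.

Let G := metric_mx s g.
Let Gi := metric_mx s (fun i => (g i)^-1).

Lemma sum_ifS (V : nmodType) q (F : 'I_n -> V) :
  \sum_h (if q == s h then F h else 0) = F (s q).
Proof.
rewrite (bigD1 (s q)) //= ss eqxx big1 ?addr0 // => h hne.
case: eqP => // E; by rewrite E ss eqxx in hne.
Qed.

Lemma sum_ifS' (V : nmodType) q (F : 'I_n -> V) :
  \sum_h (if h == s q then F h else 0) = F (s q).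
Proof.
rewrite (bigD1 (s q)) //= eqxx big1 ?addr0 // => h /negbTE -> //.
Qed.

Lemma GGi : G *m Gi = 1%:M.
Proof.
apply/matrixP => i j; rewrite !mxE.
under eq_bigr => l _ do rewrite !mxE.
rewrite (bigD1 (s i)) //= eqxx ss big1 ?addr0 => [|l /negbTE ->]; last by rewrite mul0r.
rewrite gs eq_sym; case: (i == j); rewrite ?mulr0 //= mulfV //.
Qed.

Lemma invG : invmx G = Gi.
Proof.
have [uG _] := mulmx1_unit GGi.
by rewrite -[invmx G]mulmx1 -GGi mulmxA mulVmx // mul1mx.
Qed.

Lemma gfE u v : gf G u v = \sum_a u 0 a * g a * v 0 (s a).
Proof.
rewrite /gf !mxE.
under eq_bigr => b _ do rewrite !mxE big_distrl.
rewrite exchange_big; apply: eq_bigr => a _ /=.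
under eq_bigr => b _ do rewrite !mxE.
rewrite (bigD1 (s a)) //= eqxx big1 ?addr0 // => b /negbTE ->.
by rewrite mulr0 mul0r.
Qed.

Lemma ebasE (a q : 'I_n) : (ebas R a) 0 q = (a == q)%:R.
Proof. by rewrite /ebas mxE eqxx eq_sym. Qed.

Lemma gf_br_e i j h : gf G (br C i j) (ebas R h) = C i j (s h) * g h.
Proof.
rewrite gfE (bigD1 (s h)) //= big1 ?addr0.
  by rewrite ebasE !mxE ss eqxx mulr1 gs.
move=> a ne; rewrite ebasE; case: eqP; last by rewrite mulr0.
by move=> E; rewrite E ss eqxx in ne.
Qed.

Definition Gam i j q := 2^-1 * (C i j q - g i / g q * C j (s q) (s i) + g j / g q * C (s q) i (s j)).

Lemma LCE i j : LC C G i j = \row_q Gam i j q.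
Proof.
apply/rowP => q; rewrite /LC invG !mxE.
under eq_bigr => h _ do rewrite !mxE.
under eq_bigr => h _ do rewrite (fun_if (fun t => _ * t)) mulr0.
rewrite sum_ifS !gf_br_e !ss /Gam !gs.
have := gnz q; have := gnz i; have := gnz j => ? ? ?.
field; done.
Qed.

Lemma sum_ebas (V : lmodType R) a (F : 'I_n -> V) : \sum_j (ebas R a) 0 j *: F j = F a.
Proof.
rewrite (bigD1 a) //= ebasE eqxx scale1r big1 ?addr0 // => j ne.
by rewrite ebasE eq_sym (negbTE ne) scale0r.
Qed.

Lemma nablaE1 a v : nabla C G (ebas R a) v = \sum_j v 0 j *: LC C G a j.
Proof.
rewrite /nabla.
under eq_bigr => i _ do under eq_bigr => j _ do rewrite -scalerA.
under eq_bigr => i _ do rewrite -scaler_sumr.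
by rewrite sum_ebas.
Qed.

Lemma nablaE2 u b : nabla C G u (ebas R b) = \sum_i u 0 i *: LC C G i b.
Proof.
rewrite /nabla; apply: eq_bigr => i _.
under eq_bigr => j _ do rewrite mulrC -scalerA.
by rewrite sum_ebas.
Qed.

Lemma brvE i j : brv C (ebas R i) (ebas R j) = br C i j.
Proof.
rewrite /brv.
under eq_bigr => a _ do under eq_bigr => b _ do rewrite mulrC -scalerA.
under eq_bigr => a _ do rewrite sum_ebas.
by rewrite sum_ebas.
Qed.

Lemma ricE j l : ricci_form C G j l =
  \sum_i (\sum_b Gam j l b * Gam i b i - \sum_b Gam i l b * Gam j b i
          - \sum_p C i j p * Gam p l i).
Proof.
rewrite /ricci_form; apply: eq_bigr => i _.
have LCE' : LC C G = fun i j => \row_q Gam i j q.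
  by apply/funext => x; apply/funext => y; rewrite LCE.
rewrite /curv brvE !nablaE1 nablaE2 !sum_ebas LCE' !mxE !summxE.
congr (_ - _ - _).
- by apply: eq_bigr => b _; rewrite !mxE.
- by apply: eq_bigr => b _; rewrite !mxE.
- by apply: eq_bigr => p _; rewrite !mxE.
Qed.


Lemma sum_s (V : nmodType) (F : 'I_n -> V) : \sum_i F i = \sum_i F (s i).
Proof. exact: (reindex_inj (@perm_inj _ s)). Qed.

Lemma sum_anti (f : 'I_n -> R) : (forall i, f (s i) = - f i) -> \sum_i f i = 0.
Proof.
move=> H; have E : \sum_i f i = - \sum_i f i.
  by rewrite {1}sum_s -sumrN; apply: eq_bigr => i _; rewrite H.
lra.
Qed.

Lemma Cxyy b i : C b i i = 0.
Proof. by have /eqP := kill b b i i; rewrite mulf_eq0 orbb => /eqP. Qed.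

Lemma Cxyx i b : C i b i = 0.
Proof. by rewrite antisym Cxyy oppr0. Qed.

Lemma trGam b : \sum_i Gam i b i = 0.
Proof.
apply: sum_anti => i; rewrite /Gam !Cxyx !Cxyy !ss !gs (antisym i (s i)); ring.
Qed.

Definition p1q2 j l i b := g j / g i * C i l b * C b (s i) (s j).
Definition p2q2 j l i b := g j / g b * C l (s b) (s i) * C b (s i) (s j).
Definition p1q3 j l i b := g b / g i * C i l b * C (s i) j (s b).
Definition p2q1 j l i b := g i / g b * C l (s b) (s i) * C j b i.
Definition p3q1 j l i b := g l / g b * C (s b) i (s l) * C j b i.
Definition p3q2 j l i b := g l / g b * (g j / g i) * C (s b) i (s l) * C b (s i) (s j).
Definition p3q3 j l i b := g l / g i * C (s b) i (s l) * C (s i) j (s b).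
Definition u2 j l i p := g p / g i * C i j p * C l (s i) (s p).
Definition u3 j l i p := g l / g i * C i j p * C (s i) p (s l).

Lemma B_expand j l i b : Gam i l b * Gam j b i = 4^-1 * (- p1q2 j l i b + p1q3 j l i b
   - p2q1 j l i b + p2q2 j l i b + p3q1 j l i b - p3q2 j l i b + p3q3 j l i b).
Proof.
have h1 : C i l b * C j b i = 0 by rewrite antisym mulNr kill oppr0.
have h2 : C l (s b) (s i) * C (s i) j (s b) = 0 by rewrite (antisym (s i)) mulrN kill oppr0.
have E : Gam i l b * Gam j b i = 4^-1 * (C i l b * C j b i - C l (s b) (s i) * C (s i) j (s b)
   + (- p1q2 j l i b + p1q3 j l i b
   - p2q1 j l i b + p2q2 j l i b + p3q1 j l i b - p3q2 j l i b + p3q3 j l i b)).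
  have := gnz i; have := gnz b; have := gnz j; have := gnz l => ? ? ? ?.
  rewrite /Gam /p1q2 /p1q3 /p2q1 /p2q2 /p3q1 /p3q2 /p3q3; field; by rewrite !gnz.
by rewrite E h1 h2 subrr add0r.
Qed.

Lemma U_expand j l i p : C i j p * Gam p l i = - 2^-1 * u2 j l i p + 2^-1 * u3 j l i p.
Proof.
have h3 : C i j p * C p l i = 0.
  by rewrite antisym (antisym p) mulrNN kill.
have E : C i j p * Gam p l i = 2^-1 * (C i j p * C p l i) - 2^-1 * u2 j l i p + 2^-1 * u3 j l i p.
  rewrite /Gam /u2 /u3; ring.
by rewrite E h3 mulr0 sub0r mulNr.
Qed.

Definition S2 (f : 'I_n -> 'I_n -> R) := \sum_i \sum_b f i b.

Lemma S2_add (f h : 'I_n -> 'I_n -> R) : S2 (fun i b => f i b + h i b) = S2 f + S2 h.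
Proof. rewrite /S2 -big_split; apply: eq_bigr => i _; by rewrite big_split. Qed.
Lemma S2_opp (f : 'I_n -> 'I_n -> R) : S2 (fun i b => - f i b) = - S2 f.
Proof. rewrite /S2 -sumrN; apply: eq_bigr => i _; by rewrite sumrN. Qed.
Lemma S2_sub (f h : 'I_n -> 'I_n -> R) : S2 (fun i b => f i b - h i b) = S2 f - S2 h.
Proof. by rewrite S2_add S2_opp. Qed.
Lemma S2_scale c (f : 'I_n -> 'I_n -> R) : S2 (fun i b => c * f i b) = c * S2 f.
Proof. rewrite /S2 mulr_sumr; apply: eq_bigr => i _; by rewrite mulr_sumr. Qed.

Lemma sumB j l : \sum_i \sum_b Gam i l b * Gam j b i = 4^-1 * (- S2 (p1q2 j l) + S2 (p1q3 j l)
   - S2 (p2q1 j l) + S2 (p2q2 j l) + S2 (p3q1 j l) - S2 (p3q2 j l) + S2 (p3q3 j l)).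
Proof.
under eq_bigr => i _ do under eq_bigr => b _ do rewrite B_expand.
rewrite -/(S2 _).
by rewrite S2_scale !S2_add !S2_opp.
Qed.

Lemma sumU j l : \sum_i \sum_p C i j p * Gam p l i = - 2^-1 * S2 (u2 j l) + 2^-1 * S2 (u3 j l).
Proof.
under eq_bigr => i _ do under eq_bigr => b _ do rewrite U_expand.
by rewrite -/(S2 _) S2_add !S2_scale.
Qed.

Lemma S2_s (f : 'I_n -> 'I_n -> R) : S2 f = S2 (fun i b => f (s i) (s b)).
Proof.
rewrite /S2 sum_s; apply: eq_bigr => i _; by rewrite sum_s.
Qed.

Lemma S2_swap (f : 'I_n -> 'I_n -> R) : S2 f = S2 (fun i b => f b i).
Proof. by rewrite /S2 exchange_big. Qed.

Lemma S2_ext (f h : 'I_n -> 'I_n -> R) : (forall i b, f i b = h i b) -> S2 f = S2 h.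
Proof. by move=> H; rewrite /S2; apply: eq_bigr => i _; apply: eq_bigr => b _. Qed.

Lemma id_a j l : S2 (p1q3 j l) = S2 (p2q1 j l).
Proof.
rewrite S2_swap S2_s; apply: S2_ext => i b.
rewrite /p1q3 /p2q1 !ss !gs (antisym (s b) l) (antisym b j); ring.
Qed.

Lemma id_b j l : S2 (p2q2 j l) = S2 (p1q2 j l).
Proof.
apply/eqP; rewrite -subr_eq0; apply/eqP.
have -> : S2 (p2q2 j l) = S2 (fun i b => g j / g i * C l (s i) b * C i b (s j)).
  rewrite /S2 sum_s exchange_big; apply: eq_bigr => i _; apply: eq_bigr => b _.
  by rewrite /p2q2 ss.
have J : forall i, \sum_b (g j / g i * C l (s i) b * C i b (s j) - p1q2 j l i b)
    = g j / g i * \sum_b C i (s i) b * C l b (s j).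
  move=> i; rewrite mulr_sumr; apply/eqP; rewrite -subr_eq0 -sumrB; apply/eqP.
  transitivity (- (g j / g i) * \sum_b (C i l b * C b (s i) (s j) + C l (s i) b * C b i (s j)
     + C (s i) i b * C b l (s j))); last by rewrite jacobi mulr0.
  rewrite mulr_sumr; apply: eq_bigr => b _.
  rewrite /p1q2 (antisym i b) (antisym i (s i)) (antisym l b); ring.
rewrite /S2 -sumrB.
under eq_bigr => i _ do rewrite -sumrB J.
apply: sum_anti => i; rewrite ss gs -mulrN -sumrN; congr (_ * _).
by apply: eq_bigr => b _; rewrite (antisym (s i)) mulNr.
Qed.

Lemma id_c1 j l : S2 (p3q3 j l) = S2 (p3q1 j l).
Proof.
rewrite S2_s S2_swap; apply: S2_ext => i b.
rewrite /p3q3 /p3q1 !ss (antisym i (s b)) (antisym b j) gs; ring.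
Qed.

Lemma id_c2 j l : S2 (u3 j l) = - S2 (p3q1 j l).
Proof.
rewrite S2_swap -S2_opp; apply: S2_ext => i b.
rewrite /u3 /p3q1 (antisym b j); ring.
Qed.

Definition F1 j l := 2^-1 * S2 (u2 j l).
Definition F2 j l := 4^-1 * S2 (p3q2 j l).

Lemma ric_F j l : ricci_form C G j l = F1 j l + F2 j l.
Proof.
rewrite ricE !sumrB.
have A0 : \sum_i \sum_b Gam j l b * Gam i b i = 0.
  by rewrite exchange_big big1 // => b _; rewrite -mulr_sumr trGam mulr0.
rewrite A0 sub0r sumB sumU id_a id_b id_c1 id_c2 /F1 /F2; field; done.
Qed.

Hypothesis nice1 : forall i j k k', C i j k != 0 -> C i j k' != 0 -> k = k'.
Hypothesis nice2 : forall i j h h', C i h j != 0 -> C i h' j != 0 -> h = h'.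
Hypothesis pat : forall i j k, (C i j k != 0) = (C (s i) (s j) (s k) != 0).

Definition Y x y z := C x y z * C (s x) (s y) (s z) * g z / (g x * g y).

Lemma F1_off j l : l != s j -> F1 j l = 0.
Proof.
move=> ne; rewrite /F1 /S2 big1 ?mulr0 // => i _; apply: big1 => p _; rewrite /u2.
have [Z|nz1] := eqVneq (C i j p) 0; first by rewrite Z mulr0 mul0r.
have [Z|nz2] := eqVneq (C l (s i) (s p)) 0; first by rewrite Z mulr0.
exfalso; rewrite pat !ss in nz2.
have nz3 : C i (s l) p != 0 by rewrite antisym oppr_eq0.
have E := nice2 nz1 nz3.
by rewrite E ss eqxx in ne.
Qed.

Lemma F2_off j l : l != s j -> F2 j l = 0.
Proof.
move=> ne; rewrite /F2 /S2 big1 ?mulr0 // => i _; apply: big1 => b _; rewrite /p3q2.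
have [Z|nz1] := eqVneq (C (s b) i (s l)) 0; first by rewrite Z mulr0 mul0r.
have [Z|nz2] := eqVneq (C b (s i) (s j)) 0; first by rewrite Z mulr0.
exfalso; rewrite pat !ss in nz2.
have E := nice1 nz1 nz2.
by rewrite -E ss eqxx in ne.
Qed.

Lemma S2_s2 (f : 'I_n -> 'I_n -> R) : S2 f = S2 (fun i b => f i (s b)).
Proof. by rewrite /S2; apply: eq_bigr => i _; rewrite sum_s. Qed.

Lemma F1_diag j : F1 j (s j) = - (g j / 2) * S2 (fun x y => Y j x y).
Proof.
rewrite /F1 (@S2_ext _ (fun x y => - g j * Y j x y)); last first.
  move=> i p; rewrite /u2 /Y (antisym i j).
  have := gnz i; have := gnz j; have := gnz p => ? ? ?; field; by rewrite !gnz.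
rewrite S2_scale; field; done.
Qed.

Lemma F2_diag j : F2 j (s j) = g j / 4 * S2 (fun x y => Y x y j).
Proof.
rewrite /F2 (@S2_ext _ (fun i b => g j * Y (s b) i j)); last first.
  move=> i b; rewrite /p3q2 /Y !ss !gs.
  have := gnz i; have := gnz j; have := gnz b => ? ? ?; field; by rewrite !gnz.
rewrite S2_scale S2_s2 S2_swap.
rewrite (@S2_ext (fun i b => Y (s (s i)) b j) (fun x y => Y x y j)); last by move=> ? ?; rewrite ss.
field; done.
Qed.

Definition Kv j := 2^-1 * S2 (fun x y => Y x y j) - S2 (fun x y => Y j x y).

Lemma ric_diag j l : ricci_form C G j l = if l == s j then g j / 2 * Kv j else 0.
Proof.
rewrite ric_F; case: eqP => [->|/eqP ne]; last by rewrite F1_off // F2_off // addr0.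
rewrite F1_diag F2_diag /Kv; field; done.
Qed.

Lemma Ric_opE : Ric_op C G = \matrix_(j, q) ((j == q)%:R * (2^-1 * Kv j)).
Proof.
apply/matrixP => j q; rewrite /Ric_op invG !mxE.
under eq_bigr => l _ do rewrite !mxE ric_diag.
rewrite (bigD1 (s j)) //= eqxx big1 ?addr0; last first.
  by move=> l /negbTE ->; rewrite mul0r.
rewrite ss gs; case: (eqVneq j q) => [->|ne]; first by rewrite mul1r; field; rewrite gnz.
by rewrite !mulr0 mul0r.
Qed.

End Ricci.
Arguments Gam {R n} C s g i j q.

Section Arr.
Variables (R : realType) (n : nat) (C : 'I_n -> 'I_n -> 'I_n -> R) (s : {perm 'I_n}) (g : 'I_n -> R).
Hypothesis antisym : forall i j k, C i j k = - C j i k.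

Let Yf := Y C s g.

Lemma C_diag x z : C x x z = 0.
Proof. have := antisym x x z; lra. Qed.

Lemma Y_sym x y z : Yf x y z = Yf y x z.
Proof. by rewrite /Yf /Y (antisym x y) (antisym (s x) (s y)) mulrNN (mulrC (g x)). Qed.

Lemma Y_diag x z : Yf x x z = 0.
Proof. by rewrite /Yf /Y C_diag !mul0r. Qed.

Definition Mt (t : triple n) (l : 'I_n) : R :=
  (l == t.2)%:R - (l == t.1.1)%:R - (l == t.1.2)%:R.

Lemma MrootE (a : arrows C) l : (Mroot a l)%:~R = Mt (val a) l.
Proof. by rewrite /Mroot /Mt; case: a => [[[i p] k] h] /=; rewrite !intrB. Qed.

Lemma sum_delta (F : 'I_n -> R) j : \sum_k (j == k)%:R * F k = F j.
Proof.
rewrite (bigD1 j) //= eqxx mul1r big1 ?addr0 // => k ne.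
by rewrite eq_sym (negbTE ne) mul0r.
Qed.

Lemma sym_half (Z : 'I_n -> 'I_n -> R) : (forall i p, Z i p = Z p i) -> (forall i, Z i i = 0) ->
  \sum_(i : 'I_n) \sum_(p : 'I_n) (if (i < p)%N then Z i p else 0) = 2^-1 * \sum_i \sum_p Z i p.
Proof.
move=> Zs Zd.
have E : \sum_i \sum_p Z i p = \sum_(i : 'I_n) \sum_(p : 'I_n) (if (i < p)%N then Z i p else 0)
          + \sum_(i : 'I_n) \sum_(p : 'I_n) (if (p < i)%N then Z i p else 0).
  rewrite -big_split; apply: eq_bigr => i _; rewrite -big_split; apply: eq_bigr => p _ /=.
  case: (ltngtP i p) => [h|h|h]; rewrite ?addr0 ?add0r //.
  by have E0 : i = p := val_inj h; rewrite E0 Zd.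
have E2 : \sum_(i : 'I_n) \sum_(p : 'I_n) (if (p < i)%N then Z i p else 0)
          = \sum_(i : 'I_n) \sum_(p : 'I_n) (if (i < p)%N then Z i p else 0).
  rewrite exchange_big; apply: eq_bigr => i _; apply: eq_bigr => p _; by rewrite Zs.
rewrite E E2; field; done.
Qed.

Lemma Kv_arrows j : \sum_(a : arrows C) (Mroot a j)%:~R * Yf (val a).1.1 (val a).1.2 (val a).2
   = Kv C s g j.
Proof.
under eq_bigr => a _ do rewrite MrootE.
rewrite -(big_sub (is_arrow C) (fun t => Mt t j * Yf t.1.1 t.1.2 t.2)) big_mkcond /=.
transitivity (\sum_(i : 'I_n) \sum_(p : 'I_n) \sum_(k : 'I_n) (if (i < p)%N then Mt ((i, p), k) j * Yf i p k else 0)).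
  rewrite pair_bigA /= pair_bigA /=; apply: eq_bigr => [[[i p] k]] _ /=.
  rewrite /is_arrow /= unfold_in /is_arrow /=.
  case: (i < p)%N => //=; case: eqP => [E|] //=.
  by rewrite /Yf /Y E !mul0r mulr0.
pose W i p := \sum_k Yf i p k.
transitivity (\sum_(i : 'I_n) \sum_(p : 'I_n) (if (i < p)%N then Yf i p j - ((j == i)%:R + (j == p)%:R) * W i p else 0)).
  apply: eq_bigr => i _; apply: eq_bigr => p _; case: ifP => _; last by rewrite big1.
  rewrite /Mt /=; under eq_bigr => k _ do rewrite !mulrBl.
  rewrite !sumrB sum_delta /W mulrDl !mulr_sumr; ring.
rewrite sym_half; last first.
- by move=> i; rewrite Y_diag /W big1 ?mulr0 ?subrr // => k _; rewrite Y_diag.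
- move=> i p; rewrite [Yf i p j]Y_sym [((j == i)%:R + _)]addrC; congr (_ - (_ * _)); rewrite /W.
  by apply: eq_bigr => k _; rewrite Y_sym.
have h1 : \sum_i \sum_p (j == i)%:R * W i p = \sum_p W j p.
  under eq_bigr => i _ do rewrite -mulr_sumr. by rewrite sum_delta.
have h2 : \sum_i \sum_p (j == p)%:R * W i p = \sum_p W j p.
  under eq_bigr => i _ do rewrite sum_delta.
  by apply: eq_bigr => i _; rewrite /W; apply: eq_bigr => k _; rewrite Y_sym.
have h12 : S2 (fun i p => ((j == i)%:R + (j == p)%:R) * W i p) = 2 * \sum_p W j p.
  rewrite (@S2_ext _ _ _ (fun i p => (j == i)%:R * W i p + (j == p)%:R * W i p)); last first.
    by move=> *; rewrite mulrDl.
  rewrite S2_add /S2 h1 h2; ring.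
rewrite -/(S2 _) S2_add S2_opp h12 /Kv /W /S2 /Yf; field; done.
Qed.

End Arr.

Lemma perm_invol (n : nat) (s : {perm 'I_n}) : #[s]%g = 2%N -> forall i, s (s i) = i.
Proof.
move=> H i; have := expg_order s; rewrite H expgS expg1 => /(congr1 (fun p : {perm 'I_n} => p i)).
by rewrite permM perm1.
Qed.

Section Nil.
Variables (R : realType) (n : nat) (C : 'I_n -> 'I_n -> 'I_n -> R).

Let f := fun i (A : 'M[R]_n) => ad C i *m A.

Lemma foldr_ad (sq : seq 'I_n) (B : 'M[R]_n) : foldr f B sq = foldr f 1%:M sq *m B.
Proof.
elim: sq => [|x sq IH] /=; first by rewrite mul1mx.
by rewrite /f IH mulmxA.
Qed.

Lemma kill_lemma : nilpotent_lie C -> nice_basis C -> forall l j i b, C l i b * C j b i = 0.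
Proof.
move=> [N HN] [nice1 _] l j i b.
apply/eqP; apply: contraT => nz.
have nz1 : C l i b != 0 by move: nz; rewrite mulf_eq0 negb_or => /andP[].
have nz2 : C j b i != 0 by move: nz; rewrite mulf_eq0 negb_or => /andP[].
set x := C l i b * C j b i.
have r1 : ebas R i *m ad C l = C l i b *: ebas R b.
  apply/rowP => k; rewrite !mxE.
  rewrite (bigD1 i) //= big1 ?addr0; last first.
    by move=> h /negbTE hne; rewrite !mxE eqxx hne /= mul0r.
  rewrite !mxE !eqxx /= mul1r eq_sym; case: eqP => [->|/eqP ne]; first by rewrite mulr1.
  rewrite mulr0; apply/eqP; apply: contraT => nz3.
  by have := nice1 _ _ _ _ nz1 nz3; move/eqP: ne.
have r2 : ebas R b *m ad C j = C j b i *: ebas R i.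
  apply/rowP => k; rewrite !mxE.
  rewrite (bigD1 b) //= big1 ?addr0; last first.
    by move=> h /negbTE hne; rewrite !mxE eqxx hne /= mul0r.
  rewrite !mxE !eqxx /= mul1r eq_sym; case: eqP => [->|/eqP ne]; first by rewrite mulr1.
  rewrite mulr0; apply/eqP; apply: contraT => nz3.
  by have := nice1 _ _ _ _ nz2 nz3; move/eqP: ne.
pose sq m := flatten (nseq m [:: l; j]).
have Hp : forall m, ebas R i *m foldr f 1%:M (sq m) = x ^+ m *: ebas R i.
  elim=> [|m IH]; first by rewrite /= mulmx1 expr0 scale1r.
  rewrite /sq /= -/(sq m) /f mulmxA r1 -scalemxAl mulmxA r2 -scalemxAl.
  by rewrite -/f IH !scalerA exprS.
have sz : size (sq (N + N)%N) = (N + N + (N + N))%N.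
  by rewrite /sq; elim: (N + N)%N => //= m ->; rewrite addnS addSn.
have sz2 : size (take N (sq (N + N)%N)) == N.
  by rewrite size_take sz; case: ifP => //; lia.
have := HN (Tuple sz2) => /= H0.
have := Hp (N + N)%N; rewrite -(cat_take_drop N (sq (N + N)%N)).
rewrite /f foldr_cat -/f foldr_ad H0 mul0mx mulmx0 => /rowP/(_ i).
rewrite !mxE !eqxx /= mulr1 => /eqP; rewrite eq_sym expf_eq0 => /andP[_].
by move=> /eqP; move/eqP: nz.
Qed.

End Nil.

Lemma ls_mul (R : realType) (x y : R) : x != 0 -> y != 0 ->
  logsign (x * y) = logsign x (+) logsign y.
Proof.
rewrite /logsign => hx hy.
have [xn|xp] := ltrP x 0; have [yn|yp] := ltrP y 0 => /=.
- apply/negbTE; rewrite -leNgt; nra.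
- have : 0 < y by rewrite lt0r hy.
  move=> ?; nra.
- have : 0 < x by rewrite lt0r hx.
  move=> ?; nra.
- have : 0 < y by rewrite lt0r hy.
  have : 0 < x by rewrite lt0r hx.
  move=> ? ?; apply/negbTE; rewrite -leNgt; nra.
Qed.

Lemma ls_inv (R : realType) (x : R) : logsign (x^-1) = logsign x.
Proof. by rewrite /logsign invr_lt0. Qed.

Lemma sign_abs_eq (R : realType) (x y : R) : x != 0 -> y != 0 ->
  `|x| = `|y| -> logsign x = logsign y -> x = y.
Proof.
rewrite /logsign => hx hy.
have [xn|xp] := ltrP x 0; have [yn|yp] := ltrP y 0 => //=.
- by rewrite !ltr0_norm // => /oppr_inj.
- by rewrite !ger0_norm.
Qed.

Lemma sum_delta' (R : realType) n (F : 'I_n -> R) j : \sum_k (k == j)%:R * F k = F j.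
Proof.
rewrite (bigD1 j) //= eqxx mul1r big1 ?addr0 // => k ne.
by rewrite (negbTE ne) mul0r.
Qed.

Section Main.
Variables (R : realType) (n : nat) (C : 'I_n -> 'I_n -> 'I_n -> R) (s : {perm 'I_n}).
Hypothesis antisym : forall i j k, C i j k = - C j i k.
Hypothesis ss : forall i, s (s i) = i.
Hypothesis pat : forall i j k, (C i j k != 0) = (C (s i) (s j) (s k) != 0).

Lemma s_eq (x y : 'I_n) : (x == s y) = (s x == y).
Proof. by rewrite -(inj_eq (@perm_inj _ s)) ss. Qed.

Lemma is_arrow_img t : is_arrow C t -> is_arrow C (tri_img s t).
Proof.
case: t => [[i p] k] /andP [/= ip nz]; rewrite /tri_img.
case: ifP => h; apply/andP; split => //=.
- by rewrite -pat.
- have : s i != s p by rewrite (inj_eq (@perm_inj _ s)); apply/eqP => E; move: ip; rewrite E ltnn.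
  move/eqP => ne; have ne' : (s i : nat) <> s p by move=> E; apply: ne; apply: val_inj.
  move/negbT: h; lia.
- by rewrite antisym oppr_eq0 -pat.
Qed.

Definition sarr (a : arrows C) : arrows C := exist _ (tri_img s (val a)) (is_arrow_img (valP a)).

Lemma sarrK : involutive sarr.
Proof.
case=> [[[i p] k] h]; apply: val_inj => /=; rewrite /tri_img.
move: (h) => /andP [/= ip _].
case: ifP => h1 /=; rewrite !ss; first by rewrite ip.
by rewrite ltnNge (ltnW ip).
Qed.

Lemma sarr_inj : injective sarr.
Proof. exact: (inv_inj sarrK). Qed.

Lemma inv_arrP (X : arrows C -> R) : inv_arr C s X <-> forall a, X (sarr a) = X a.
Proof.
split=> H a; first exact: H.
move=> b E; have -> : b = sarr a by apply: val_inj. exact: H.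
Qed.

Lemma sum_sarr (F : arrows C -> R) : \sum_a F a = \sum_a F (sarr a).
Proof. exact: (reindex_inj sarr_inj). Qed.

Lemma Mt_sarr a l : Mt R (val (sarr a)) l = Mt R (val a) (s l).
Proof.
case: a => [[[i p] k] h]; rewrite /Mt /= /tri_img.
by case: ifP => _ /=; rewrite !s_eq; ring.
Qed.

Lemma ctildeE a : ctilde C s a = - C (s (val a).1.1) (s (val a).1.2) (s (val a).2).
Proof.
case: a => [[[i p] k] h]; rewrite /ctilde /sc /=.
by case: ifP => _ //; rewrite opprK antisym.
Qed.

Lemma cvecE a : cvec C a = - C (val a).1.1 (val a).1.2 (val a).2.
Proof. by []. Qed.

Lemma abs_cvec_sarr a : `|cvec C (sarr a)| = `|ctilde C s a|.
Proof.
rewrite ctildeE cvecE; case: a => [[[i p] k] h] /=; rewrite /tri_img.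
by case: ifP => _ //=; rewrite antisym !normrN.
Qed.

Lemma abs_ctilde_sarr a : `|ctilde C s (sarr a)| = `|cvec C a|.
Proof. by rewrite -abs_cvec_sarr sarrK. Qed.

Lemma cvec_neq0 a : cvec C a != 0.
Proof. by case: a => [[[i p] k] h]; have /andP[_ h'] := h; rewrite cvecE oppr_eq0. Qed.

Lemma ctilde_neq0 a : ctilde C s a != 0.
Proof.
by case: a => [[[i p] k] h]; have /andP[_ h'] := h; rewrite ctildeE oppr_eq0 /= -pat.
Qed.

Lemma M2_E (delta : 'I_n -> bool) a :
  M2_mul C delta a = delta (val a).1.1 (+) delta (val a).1.2 (+) delta (val a).2.
Proof.
case: a => [[[i p] k] h]; rewrite /M2_mul /=.
have E : forall l, odd `|Mroot (exist _ (i, p, k) h) l| && delta l =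
   ((l == i) && delta l) (+) ((l == p) && delta l) (+) ((l == k) && delta l).
  move=> l; rewrite /Mroot /=.
  by case: (l == i); case: (l == p); case: (l == k); case: (delta l).
under eq_bigr => l _ do rewrite E.
have P1 : forall x, \big[addb/false]_(l < n) ((l == x) && delta l) = delta x.
  move=> x; rewrite (bigD1 x) //= eqxx big1 ?addbF // => l /negbTE -> //.
by rewrite !big_split /= !P1.
Qed.

Lemma monopowE (X al : arrows C -> R) : (forall a, X a != 0) ->
  monopow X al = expR (\sum_a al a * ln `|X a|).
Proof.
move=> h; rewrite /monopow expR_sum; apply: eq_bigr => a _.
by rewrite /powR normr_eq0 (negbTE (h a)).
Qed.

Lemma sum_ctilde (al : arrows C -> R) : (forall a, al (sarr a) = al a) ->
  \sum_a al a * ln `|ctilde C s a| = \sum_a al a * ln `|cvec C a|.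
Proof.
move=> H; rewrite sum_sarr; apply: eq_bigr => a _; by rewrite H abs_ctilde_sarr.
Qed.

Lemma sum_Mt (al : arrows C -> R) (h : 'I_n -> R) :
  (forall l, \sum_a (Mroot a l)%:~R * al a = 0) ->
  \sum_a al a * \sum_l Mt R (val a) l * h l = 0.
Proof.
move=> H; under eq_bigr => a _ do rewrite mulr_sumr.
rewrite exchange_big big1 // => l _.
transitivity (h l * \sum_a (Mroot a l)%:~R * al a); last by rewrite H mulr0.
rewrite mulr_sumr; apply: eq_bigr => a _; rewrite MrootE; ring.
Qed.

Lemma Mroot_sarr a l : (Mroot (sarr a) l)%:~R = (Mroot a (s l))%:~R :> R.
Proof. by rewrite !MrootE Mt_sarr. Qed.

Lemma solve_M (v : arrows C -> R) :
  (forall w : arrows C -> R, (forall l, \sum_a (Mroot a l)%:~R * w a = 0) -> \sum_a w a * v a = 0) ->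
  exists y : 'I_n -> R, forall a, \sum_l (Mroot a l)%:~R * y l = v a.
Proof.
move=> H.
pose M : 'M[R]_(n, #|{: arrows C}|) := \matrix_(l, r) (Mroot (enum_val r) l)%:~R.
pose vr : 'rV[R]_#|{: arrows C}| := \row_r v (enum_val r).
have : (vr <= M)%MS.
  rewrite submxE; apply/eqP/rowP => c; rewrite !mxE.
  pose w := fun a => cokermx M (enum_rank a) c.
  have Hw : forall l, \sum_a (Mroot a l)%:~R * w a = 0.
    move=> l; have E0 := congr1 (fun A : 'M[R]_(n, #|{: arrows C}|) => A l c) (mulmx_coker M).
    rewrite !mxE in E0; apply: etrans E0.
    rewrite big_enum_val /=; apply: eq_bigr => r _; by rewrite /w enum_valK [M l r]mxE.
  apply: etrans (H w Hw); symmetry.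
  rewrite big_enum_val /=; apply: eq_bigr => r _; by rewrite /w enum_valK [vr 0 r]mxE mulrC.
move/submxP => [D E].
exists (fun l => D 0 l) => a.
have := congr1 (fun A : 'rV[R]_#|{: arrows C}| => A 0 (enum_rank a)) E; rewrite !mxE enum_rankK => ->.
by apply: eq_bigr => l _; rewrite mxE enum_rankK mulrC.
Qed.

Section WithG.
Variable g : 'I_n -> R.
Hypothesis gnz : forall i, g i != 0.
Hypothesis gs : forall i, g (s i) = g i.

Definition Yv (a : arrows C) := Y C s g (val a).1.1 (val a).1.2 (val a).2.

Lemma YvE a : Yv a = cvec C a * ctilde C s a * (g (val a).2 * (g (val a).1.1 * g (val a).1.2)^-1).
Proof. rewrite /Yv /Y ctildeE cvecE; ring. Qed.

Lemma Yv_neq0 a : Yv a != 0.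
Proof.
by rewrite YvE !mulf_neq0 ?cvec_neq0 ?ctilde_neq0 ?gnz ?invr_eq0 ?mulf_neq0 ?gnz.
Qed.

Lemma Yv_sarr a : Yv (sarr a) = Yv a.
Proof.
rewrite /Yv; case: a => [[[i p] k] h] /=; rewrite /tri_img.
case: ifP => _ /=; rewrite /Y !ss !gs; last rewrite (antisym (s p)) (antisym p); field; rewrite ?gnz //.
Qed.

Lemma Yv_ls (delta : 'I_n -> bool) : (forall i, logsign (g i) = delta i) ->
  forall a, logsign (Yv a) (+) logsign (cvec C a) (+) logsign (ctilde C s a) = M2_mul C delta a.
Proof.
move=> hd a; rewrite M2_E YvE.
rewrite !ls_mul ?mulf_neq0 ?cvec_neq0 ?ctilde_neq0 ?gnz ?invr_eq0 ?mulf_neq0 ?gnz //.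
rewrite ls_inv ls_mul ?gnz // !hd.
case: (logsign (cvec C a)); case: (logsign (ctilde C s a));
  case: (delta (val a).1.1); case: (delta (val a).1.2); by case: (delta (val a).2).
Qed.

Lemma Yv_ln a : ln `|Yv a| = ln `|cvec C a| + ln `|ctilde C s a| + \sum_l Mt R (val a) l * ln `|g l|.
Proof.
have pos : forall x : R, x != 0 -> `|x| \in Num.pos by move=> x hx; rewrite posrE normr_gt0.
have pc := pos _ (cvec_neq0 a); have pt := pos _ (ctilde_neq0 a).
have pk := pos _ (gnz (val a).2); have pi := pos _ (gnz (val a).1.1).
have pp := pos _ (gnz (val a).1.2).
have pip : `|g (val a).1.1| * `|g (val a).1.2| \in Num.pos by rewrite rpredM.
have pipV : (`|g (val a).1.1| * `|g (val a).1.2|)^-1 \in Num.pos by rewrite rpredV.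
rewrite YvE !normrM normrV ?unitfE ?mulf_neq0 ?gnz // normrM.
rewrite lnM ?rpredM // lnM // lnM // lnV // lnM //.
rewrite /Mt; under eq_bigr => l _ do rewrite !mulrBl.
rewrite !sumrB !sum_delta'; ring.
Qed.

Lemma Yv_P (al : arrows C -> R) : kerMT_inv C s al ->
  monopow Yv al = monopow (cvec C) (fun a => 2 * al a).
Proof.
move=> [ker inv]; move/inv_arrP: inv => inv.
rewrite (monopowE _ Yv_neq0) (monopowE _ cvec_neq0); congr expR.
under eq_bigr => a _ do rewrite Yv_ln !mulrDr.
rewrite !big_split /= sum_ctilde // sum_Mt // addr0.
rewrite -big_split /=; apply: eq_bigr => a _; ring.
Qed.

End WithG.

Hypothesis jacobi : forall i j h k, \sum_(l < n) (C i j l * C l h k + C j h l * C l i k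
                                  + C h i l * C l j k) = 0.
Hypothesis kill : forall l j i b, C l i b * C j b i = 0.
Hypothesis nice1 : forall i j k k', C i j k != 0 -> C i j k' != 0 -> k = k'.
Hypothesis nice2 : forall i j h h', C i h j != 0 -> C i h' j != 0 -> h = h'.
Variables (k : R) (delta : 'I_n -> bool) (r : nat) (alpha : 'I_r -> arrows C -> R).
Hypothesis hdelta : forall i, delta (s i) = delta i.
Hypothesis hbasis : is_basis (kerMT_inv C s) alpha.

Lemma dir1 : (exists g : 'I_n -> R,
      sigma_diag_metric s g /\
      (forall i, logsign (g i) = delta i) /\
      Ric_op C (metric_mx s g) = (k / 2)%:M) ->
  (exists X : arrows C -> R,
      inv_arr C s X /\
      (forall l : 'I_n, \sum_(a : arrows C) (Mroot a l)%:~R * X a = k) /\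
      (forall a, X a != 0) /\
      (forall a, logsign (X a) (+) logsign (cvec C a) (+) logsign (ctilde C s a)
                 = M2_mul C delta a) /\
      (forall i, monopow X (alpha i) = monopow (cvec C) (fun a => 2 * alpha i a))).
Proof.
move=> [g [[gnz gs] [hd HR]]].
exists (Yv g); split; [|split; [|split; [|split]]].
- by apply/inv_arrP => a; apply: Yv_sarr.
- move=> l; rewrite /Yv Kv_arrows //.
  have := congr1 (fun M : 'M[R]_n => M l l) HR.
  rewrite (Ric_opE antisym jacobi kill ss gnz gs nice1 nice2 pat) !mxE eqxx mul1r => E.
  rewrite mulr1n in E; lra.
- by move=> a; apply: Yv_neq0.
- by move=> a; apply: Yv_ls.
- by move=> i; apply: Yv_P => //; case: hbasis => H _; apply: H.
Qed.

Lemma dir2 : (exists X : arrows C -> R,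
      inv_arr C s X /\
      (forall l : 'I_n, \sum_(a : arrows C) (Mroot a l)%:~R * X a = k) /\
      (forall a, X a != 0) /\
      (forall a, logsign (X a) (+) logsign (cvec C a) (+) logsign (ctilde C s a)
                 = M2_mul C delta a) /\
      (forall i, monopow X (alpha i) = monopow (cvec C) (fun a => 2 * alpha i a))) ->
  (exists g : 'I_n -> R,
      sigma_diag_metric s g /\
      (forall i, logsign (g i) = delta i) /\
      Ric_op C (metric_mx s g) = (k / 2)%:M).
Proof.
move=> [X [Xinv [XK [Xnz [XL XP]]]]].
move/inv_arrP: Xinv => Xinv.
have [hker [_ hspan]] := hbasis.
pose v a := ln `|X a| - ln `|cvec C a| - ln `|ctilde C s a|.
have vinv : forall a, v (sarr a) = v a.
  by move=> a; rewrite /v Xinv abs_cvec_sarr abs_ctilde_sarr; ring.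
have hav : forall i, \sum_a alpha i a * v a = 0.
  move=> i; have [ker inv] := hker i; move/inv_arrP: inv => inv.
  have := XP i; rewrite (monopowE _ Xnz) (monopowE _ cvec_neq0) => /expR_inj E.
  rewrite /v; under eq_bigr => a _ do rewrite !mulrBr.
  rewrite !sumrB E sum_ctilde // -!sumrB big1 // => a _; ring.
have vort : forall w : arrows C -> R, (forall l, \sum_a (Mroot a l)%:~R * w a = 0) ->
    \sum_a w a * v a = 0.
  move=> w hw.
  pose w' a := w a + w (sarr a).
  have hw' : kerMT_inv C s w'.
    split.
      move=> l; rewrite /w'; under eq_bigr => a _ do rewrite mulrDr.
      rewrite big_split /= hw add0r sum_sarr.
      under eq_bigr => a _ do rewrite sarrK Mroot_sarr.
      exact: hw.
    by apply/inv_arrP => a; rewrite /w' sarrK addrC.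
  have [lam hlam] := hspan w' hw'.
  have E1 : \sum_a w' a * v a = 0.
    under eq_bigr => a _ do rewrite hlam mulr_suml.
    rewrite exchange_big big1 // => i _.
    transitivity (lam i * \sum_a alpha i a * v a); last by rewrite hav mulr0.
    rewrite mulr_sumr; apply: eq_bigr => a _; ring.
  have E2 : \sum_a w' a * v a = 2 * \sum_a w a * v a.
    rewrite /w'; under eq_bigr => a _ do rewrite mulrDl.
    rewrite big_split /=.
    have -> : \sum_a w (sarr a) * v a = \sum_a w a * v a.
      by rewrite sum_sarr; apply: eq_bigr => a _; rewrite sarrK vinv.
    ring.
  move: E1; rewrite E2 => /eqP; rewrite mulf_eq0 pnatr_eq0 /= => /eqP //.
have [y hy] := solve_M vort.
pose y' l := (y l + y (s l)) / 2.
have hy' : forall a, \sum_l (Mroot a l)%:~R * y' l = v a.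
  move=> a.
  have h2 : \sum_l (Mroot a l)%:~R * y (s l) = v a.
    rewrite (reindex_inj (@perm_inj _ s)) /=.
    under eq_bigr => l _ do rewrite ss -Mroot_sarr.
    by rewrite hy vinv.
  transitivity ((\sum_l (Mroot a l)%:~R * y l + \sum_l (Mroot a l)%:~R * y (s l)) / 2).
    rewrite -big_split mulr_suml; apply: eq_bigr => l _ /=; rewrite /y'; ring.
  by rewrite hy h2; field.
pose g l := (if delta l then -1 else 1) * expR (y' l).
have gnz : forall l, g l != 0.
  move=> l; rewrite /g mulf_neq0 ?(gt_eqF (expR_gt0 _)) //.
  by case: (delta l); rewrite ?oppr_eq0 oner_eq0.
have gs : forall l, g (s l) = g l by move=> l; rewrite /g hdelta /y' ss addrC.
have hd : forall l, logsign (g l) = delta l.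
  move=> l; rewrite /logsign /g; case: (delta l).
    by rewrite mulN1r oppr_lt0 expR_gt0.
  by rewrite mul1r ltNge (ltW (expR_gt0 _)).
have labs : forall l, ln `|g l| = y' l.
  move=> l; rewrite /g normrM.
  have -> : `|(if delta l then -1 else 1) : R| = 1 by case: (delta l); rewrite ?normrN normr1.
  by rewrite mul1r ger0_norm ?(ltW (expR_gt0 _)) // expRK.
have YX : forall a, Yv g a = X a.
  move=> a; apply: (sign_abs_eq (Yv_neq0 gnz a) (Xnz a)).
  - apply: ln_inj; rewrite ?posrE ?normr_gt0 ?Yv_neq0 ?Xnz //.
    rewrite Yv_ln //.
    under eq_bigr => l _ do rewrite labs -MrootE.
    by rewrite hy' /v; ring.
  - have := Yv_ls gnz hd a; rewrite -(XL a).
    by case: (logsign (Yv g a)); case: (logsign (X a)); case: (logsign (cvec C a));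
      case: (logsign (ctilde C s a)).
exists g; split; first by split.
split; first exact: hd.
rewrite (Ric_opE antisym jacobi kill ss gnz gs nice1 nice2 pat); apply/matrixP => i j; rewrite !mxE.
have -> : Kv C s g i = k.
  rewrite -(Kv_arrows s g antisym i) -(XK i); apply: eq_bigr => a _; by rewrite -YX.
by case: eqP => _; rewrite ?mulr1n ?mulr0n ?mul1r ?mul0r //; field.
Qed.

End Main.

End Aux.
Import Aux.

Theorem theorem2p6 (R : realType) (n : nat) (C : 'I_n -> 'I_n -> 'I_n -> R)
    (s : {perm 'I_n}) (k : R) (delta : 'I_n -> bool)
    (r : nat) (alpha : 'I_r -> arrows C -> R) :
  lie_algebra C -> nilpotent_lie C -> nice_basis C ->
  diagram_involution C s ->
  (forall i, delta (s i) = delta i) ->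
  is_basis (kerMT_inv C s) alpha ->
  (exists g : 'I_n -> R,
      sigma_diag_metric s g /\
      (forall i, logsign (g i) = delta i) /\
      Ric_op C (metric_mx s g) = (k / 2)%:M)
  <->
  (exists X : arrows C -> R,
      inv_arr C s X /\
      (forall l : 'I_n, \sum_(a : arrows C) (Mroot a l)%:~R * X a = k) /\
      (forall a, X a != 0) /\
      (forall a, logsign (X a) (+) logsign (cvec C a) (+) logsign (ctilde C s a)
                 = M2_mul C delta a) /\
      (forall i, monopow X (alpha i) = monopow (cvec C) (fun a => 2 * alpha i a))).
Proof.
move=> [antisym jacobi] Hnil Hnice [Hord pat] hdelta hbasis.
have ss := perm_invol Hord.
have kill := kill_lemma Hnil Hnice.
have [nice1 nice2] := Hnice.
split.
- by apply: dir1.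
- by apply: dir2.
Qed.
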